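(* Let $c>0$ and let $\epsilon_1,\dots,\epsilon_n$ be i.i.d. Rademacher variables. Put $L_c(\epsilon)=\max_{0\le j\le n}\big\{\sum_{i=1}^j\epsilon_i-cj\big\}$. Then $$\mathbb E[L_c(\epsilon)]\le 1+\Big(1-\exp\big(-D(\tfrac{c+1}{2}\,\|\,\tfrac12)\big)\Big)^{-2}.$$
   Context: $D(p\|q)=p\log\frac pq+(1-p)\log\frac{1-p}{1-q}$ is the binary Kullback–Leibler divergence, with the convention $D(p\|\frac12)=+\infty$ (so $\exp(-D)=0$) when $p>1$. *)

(* Defs.v *)
From HB Require Import structures.
From mathcomp Require Import all_boot all_order all_algebra.
From mathcomp Require Import all_classical all_reals all_analysis.
Set Implicit Arguments. Unset Strict Implicit. Unset Printing Implicit Defensive.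
Import Order.TTheory GRing.Theory Num.Theory.
Local Open Scope ring_scope.

(* Binary KL divergence D(p||q) = p log(p/q) + (1-p) log((1-p)/(1-q)).
   With MathComp's ln 0 = 0, the term 0 * ln 0 is 0 (usual convention). *)
Definition binKL (R : realType) (p q : R) : R :=
  p * ln (p / q) + (1 - p) * ln ((1 - p) / (1 - q)).

Definition expNKLhalf (R : realType) (p : R) : R :=
  if 1 < p then 0 else expR (- binKL p (2^-1)).

Definition rad (R : realType) (b : bool) : R := if b then 1 else -1.

Definition Lc (R : realType) (n : nat) (c : R) (e : {ffun 'I_n -> bool}) : R :=
  \big[Num.max/0]_(j < n.+1)
     ((\sum_(i < n | (i < j)%N) rad R (e i)) - c * j%:R).

(* Expectation under n i.i.d. Rademacher variables: uniform average over
   all 2^n sign patterns. *)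
Definition ERad (R : realType) (n : nat) (F : {ffun 'I_n -> bool} -> R) : R :=
  (2 ^+ n)^-1 * \sum_(e : {ffun 'I_n -> bool}) F e.

(* Main.v *)
From Pilot Require Import Defs.
From HB Require Import structures.
From mathcomp Require Import all_boot all_order all_algebra.
From mathcomp Require Import all_classical all_reals all_analysis.
From mathcomp Require Import ring lra zify.
Import Order.TTheory GRing.Theory Num.Theory.
Local Open Scope ring_scope.

Section H.
Variable R : realType.

Lemma sum_cond_le (n j : nat) (F : 'I_n -> R) :
  (forall i, F i <= 1) -> \sum_(i < n | (i < j)%N) F i <= (minn n j)%:R.
Proof.
elim: n F => [|n IH] F HF; first by rewrite big_ord0.
rewrite big_mkcond big_ord_recr /= -big_mkcond.
have := IH (fun i => F (widen_ord (leqnSn n) i)) (fun i => HF _).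
case: (boolP (n < j)%N) => hnj H.
  have -> : minn n.+1 j = (minn n j).+1 by lia.
  by rewrite -natr1; apply: lerD => //; apply: HF.
have -> : minn n.+1 j = minn n j by lia.
by rewrite addr0.
Qed.

Lemma prod_cond_le (n j : nat) (x : R) :
  1 <= x -> \prod_(i < n | (i < j)%N) x <= x ^+ j.
Proof.
move=> hx.
suff H : \prod_(i < n | (i < j)%N) x <= x ^+ (minn n j).
  by apply: (le_trans H); apply: ler_weXn2l => //; apply: geq_minr.
elim: n => [|n IH]; first by rewrite big_ord0 min0n expr0.
rewrite big_mkcond big_ord_recr /= -big_mkcond.
have x0 : 0 <= x by apply: le_trans hx.
case: (boolP (n < j)%N) => hnj.
  have -> : minn n.+1 j = (minn n j).+1 by lia.
  rewrite exprSr; apply: ler_wpM2r => //.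
have -> : minn n.+1 j = minn n j by lia.
by rewrite mulr1.
Qed.

Lemma geom_bound (N : nat) (r : R) : 0 <= r -> r < 1 ->
  \sum_(j < N) j%:R * r ^+ j <= ((1 - r) ^+ 2)^-1.
Proof.
move=> r0 r1.
have key : (1 - r) ^+ 2 * \sum_(j < N) j%:R * r ^+ j
           = r - r ^+ N * (N%:R * (1 - r) + r).
  elim: N => [|N IH]; first by rewrite big_ord0 expr0 mulr0; ring.
  rewrite big_ord_recr /= mulrDr IH (exprSr r N) -natr1; ring.
have p : 0 < (1 - r) ^+ 2 by apply: exprn_gt0; lra.
rewrite -(ler_pM2l p) mulfV ?gt_eqF // key.
have : 0 <= r ^+ N * (N%:R * (1 - r) + r).
  apply: mulr_ge0; first exact: exprn_ge0.
  apply: addr_ge0 => //; apply: mulr_ge0 => //; lra.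
lra.
Qed.


Definition Ssum (n j : nat) (e : {ffun 'I_n -> bool}) : R :=
  \sum_(i < n | (i < j)%N) @Pilot.Defs.rad R (e i).
Arguments Ssum {n}.

Lemma pointwise (n : nat) (c l : R) (e : {ffun 'I_n -> bool}) :
  0 < c -> 0 <= l ->
  @Lc R n c e <= \sum_(j < n.+1) j%:R * expR (l * (Ssum j e - c * j%:R)).
Proof.
move=> hc hl.
have X0 : 0 <= \sum_(j < n.+1) j%:R * expR (l * (Ssum j e - c * j%:R)).
  by apply: sumr_ge0 => j _; apply: mulr_ge0 => //; apply: expR_ge0.
rewrite /Lc; apply: bigmax_le => // j _.
set t := (X in X <= _).
have [ht|ht] := lerP t 0; first exact: le_trans ht X0.
rewrite (bigD1 j) //=.
have ht' : 0 < Ssum j e - c * j%:R by exact: ht.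
have hr : 0 <= \sum_(i < n.+1 | i != j) i%:R * expR (l * (Ssum i e - c * i%:R)).
  by apply: sumr_ge0 => i _; apply: mulr_ge0 => //; apply: expR_ge0.
have hS : Ssum j e <= j%:R.
  have H1 : forall i : 'I_n, @Pilot.Defs.rad R (e i) <= 1.
    by move=> i; rewrite /Pilot.Defs.rad; case: (e i) => //; lra.
  apply: le_trans (@sum_cond_le n j _ H1) _.
  by rewrite ler_nat geq_minr.
have hE : 1 <= expR (l * (Ssum j e - c * j%:R)).
  apply: le_trans (expR_ge1Dx _); rewrite lerDl; apply: mulr_ge0 => //.
  by lra.
have hj : 0 <= (j%:R : R) by [].
have hcj : 0 <= c * j%:R by apply: mulr_ge0 => //; lra.
change (Ssum j e - c * j%:R <= j%:R * expR (l * (Ssum j e - c * j%:R)) +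
  \sum_(i < n.+1 | i != j) i%:R * expR (l * (Ssum i e - c * i%:R))).
have hjE : (j%:R : R) <= j%:R * expR (l * (Ssum j e - c * j%:R)).
  by rewrite -{1}[j%:R]mulr1; apply: ler_wpM2l.
lra.
Qed.

Lemma ERad_le n (F G : {ffun 'I_n -> bool} -> R) :
  (forall e, F e <= G e) -> @ERad R n F <= @ERad R n G.
Proof.
move=> H; rewrite /ERad; apply: ler_wpM2l.
  by rewrite invr_ge0; apply: exprn_ge0.
by apply: ler_sum => e _; apply: H.
Qed.

Lemma ERad_sum n N (a : 'I_N -> R) (g : 'I_N -> {ffun 'I_n -> bool} -> R) :
  @ERad R n (fun e => \sum_(j < N) a j * g j e) = \sum_(j < N) a j * @ERad R n (g j).
Proof.
rewrite /ERad exchange_big mulr_sumr; apply: eq_bigr => j _.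
by rewrite -mulr_sumr mulrCA.
Qed.

Lemma ERad_exp n j l :
  @ERad R n (fun e : {ffun 'I_n -> bool} => expR (l * Ssum j e))
  <= ((expR l + expR (- l)) / 2) ^+ j.
Proof.
set ch := (expR l + expR (- l)) / 2.
have ch1 : 1 <= ch.
  have := expR_ge1Dx l; have := expR_ge1Dx (- l); rewrite /ch; lra.
pose F (i : 'I_n) (b : bool) : R := if (i < j)%N then expR (l * @Pilot.Defs.rad R b) else 1.
have E1 : forall e : {ffun 'I_n -> bool}, expR (l * Ssum j e) = \prod_(i < n) F i (e i).
  move=> e; rewrite /Ssum mulr_sumr expR_sum big_mkcond /=.
  by apply: eq_bigr => i _; rewrite /F; case: ifP.
rewrite /ERad (eq_bigr _ (fun e _ => E1 e)).
rewrite -(bigA_distr_bigA (fun i b => F i b)) /=.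
have E2 : forall i : 'I_n, \sum_(b : bool) F i b = 2 * (if (i < j)%N then ch else 1).
  move=> i; rewrite big_bool /= /F /Pilot.Defs.rad; case: ifP => _.
    by rewrite mulr1 mulrN1 /ch mulrC divfK // pnatr_eq0.
  by rewrite mulr1.
rewrite (eq_bigr _ (fun i _ => E2 i)) big_split /= prodr_const card_ord.
rewrite mulrA mulVf ?expf_neq0 // mul1r -big_mkcond /=.
exact: prod_cond_le.
Qed.


Lemma xlnx_gt (x : R) : 0 < x -> x != 1 -> x - 1 < x * ln x.
Proof.
move=> x0 x1.
have hl : - ln x != 0 by rewrite oppr_eq0 ln_eq0.
have := expR_gt1Dx hl; rewrite expRN lnK ?posrE // => h.
have h2 : x * (1 + - ln x) < x * x^-1 by rewrite ltr_pM2l.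
rewrite mulfV ?gt_eqF // mulrDr mulr1 mulrN in h2.
lra.
Qed.

End H.

Theorem lemma6 (R : realType) (n : nat) (c : R) (hc : 0 < c) :
  @ERad R n (fun e => @Lc R n c e) <=
  1 + ((1 - expNKLhalf ((c + 1) / 2)) ^+ 2)^-1.
Proof.
have hinv : forall x : R, 0 <= (x ^+ 2)^-1 by move=> x; rewrite invr_ge0 sqr_ge0.
have [c1|c1] := lerP 1 c.
  apply: (le_trans (@ERad_le R n _ (fun _ => 0) _)).
    move=> e; rewrite /Lc; apply: bigmax_le => // j _.
    have H1 : forall i : 'I_n, @Pilot.Defs.rad R (e i) <= 1.
      by move=> i; rewrite /Pilot.Defs.rad; case: (e i) => //; lra.
    have H2 := @sum_cond_le R n j _ H1.
    have H3 : (minn n j)%:R <= (j%:R : R) by rewrite ler_nat geq_minr.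
    have hj : 0 <= (j%:R : R) by [].
    have : (j%:R : R) <= c * j%:R by rewrite -{1}[j%:R]mul1r; apply: ler_wpM2r.
    lra.
  rewrite /ERad big1 // mulr0; have := hinv (1 - expNKLhalf ((c + 1) / 2)); lra.
set A := 1 + c; set B := 1 - c.
have hA : 0 < A by rewrite /A; lra.
have hB : 0 < B by rewrite /B; lra.
set a := ln A; set b := ln B.
set l := (a - b) / 2.
have hl : 0 <= l.
  have : b <= a by rewrite /a /b ler_ln ?posrE // /A /B; lra.
  rewrite /l; lra.
set ch := (expR l + expR (- l)) / 2.
set r := ch * expR (- (l * c)).
set Y := - ((c + 1) / 2 * a + (1 - (c + 1) / 2) * b).
have eA : expR a = A by rewrite /a lnK ?posrE.
have eB : expR b = B by rewrite /b lnK ?posrE.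
have hrY : r = expR Y.
  have h1 : expR l * expR (- (l * c)) = expR a * expR Y.
    by rewrite -!expRD; congr expR; rewrite /l /Y; field.
  have h2 : expR (- l) * expR (- (l * c)) = expR b * expR Y.
    by rewrite -!expRD; congr expR; rewrite /l /Y; field.
  by rewrite /r /ch mulrAC mulrDl h1 h2 eA eB /A /B; field.
have hY : r = expNKLhalf ((c + 1) / 2).
  rewrite hrY /expNKLhalf ifF; last by apply/negbTE; rewrite -leNgt; lra.
  congr expR; rewrite /Y /binKL.
  have -> : (c + 1) / 2 / 2^-1 = A by rewrite /A; field.
  have -> : (1 - (c + 1) / 2) / (1 - 2^-1) = B by rewrite /B; field.
  by [].
have r0 : 0 <= r by rewrite hrY expR_ge0.
have r1 : r < 1.
  rewrite hrY expR_lt1 /Y.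
  have HA := @xlnx_gt R A hA.
  have HB := @xlnx_gt R B hB.
  have nA : A != 1 by rewrite /A; apply/eqP; lra.
  have nB : B != 1 by rewrite /B; apply/eqP; lra.
  move: (HA nA) (HB nB); rewrite /A /B -/a -/b => {HA HB} HA HB.
  have -> : 1 - (c + 1) / 2 = (1 - c) / 2 by field.
  lra.
rewrite -hY.
have HE : forall e, @Lc R n c e <= \sum_(j < n.+1)
   (j%:R * expR (- (l * c)) ^+ j) * expR (l * @Ssum R n j e).
  move=> e; apply: le_trans (@pointwise R n c l e hc hl) _.
  apply: ler_sum => j _.
  rewrite -expRM_natr -mulrA -expRD.
  have -> : - (l * c) * j%:R + l * @Ssum R n j e = l * (@Ssum R n j e - c * j%:R) by ring.
  exact: lexx.
apply: le_trans (@ERad_le R n _ _ HE) _.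
rewrite ERad_sum.
apply: (@le_trans _ _ (\sum_(j < n.+1) j%:R * r ^+ j)).
  apply: ler_sum => j _; rewrite -mulrA; apply: ler_wpM2l => //.
  rewrite /r exprMn [X in _ <= X]mulrC; apply: ler_wpM2l; first by apply: exprn_ge0; apply: expR_ge0.
  exact: (@ERad_exp R n j l).
apply: le_trans (@geom_bound R n.+1 r r0 r1) _.
lra.
Qed.
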